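(* Let $R$ be a left hereditary ring, $M$ a projective left $R$-module and $N$ a submodule of $M$. Then $\beta(N)\subseteq\langle E_N(0)\rangle\subseteq\beta_{co}(N)$, where $N$ is regarded as an $R$-module.
   Context: Rings are associative with identity; modules are unital left modules. $R$ is left hereditary if every submodule of a projective left $R$-module is projective. For a module $X$: a submodule $P$ is prime if $RX\not\subseteq P$ and for every ideal $A$ of $R$ and submodule $K$ with $AK\subseteq P$, $K\subseteq P$ or $AX\subseteq P$; completely prime if $RX\not\subseteq P$ and $rx\in P$ implies $x\in P$ or $rX\subseteq P$. $\beta(X)$ (resp. $\beta_{co}(X)$) is the intersection of all prime (resp. completely prime) submodules of $X$ ($=X$ if none). $E_X(0)=\{rx: r\in R, x\in X, r^kx=0\text{ for some }k\in\mathbb N\}$, $\langle E_X(0)\rangle$ the submodule generated. *)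

(* Defs.v *)
From mathcomp Require Import all_boot all_algebra.
Set Implicit Arguments. Unset Strict Implicit. Unset Printing Implicit Defensive.
Import GRing.Theory.
Local Open Scope ring_scope.

Section Defs.
Variable R : pzRingType.

Definition is_ideal (A : R -> Prop) : Prop :=
  [/\ A 0, (forall a b, A a -> A b -> A (a + b)), (forall a, A a -> A (- a)),
      (forall r a, A a -> A (r * a)) & (forall r a, A a -> A (a * r))].

Variable M : lmodType R.

Definition is_submodule (Q : M -> Prop) : Prop :=
  [/\ Q 0, (forall x y, Q x -> Q y -> Q (x + y)) & (forall (r : R) x, Q x -> Q (r *: x))].

Definition psub (P Q : M -> Prop) : Prop := forall x, P x -> Q x.

Definition gen_submodule (S : M -> Prop) : M -> Prop :=
  fun x => forall Q, is_submodule Q -> psub S Q -> Q x.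

(* Maps out of N are represented by functions on M that are R-linear on N. *)
Definition linear_on (N : M -> Prop) (B : lmodType R) (f : M -> B) : Prop :=
  forall (r : R) x y, N x -> N y -> f (r *: x + y) = r *: f x + f y.

Definition projective_sub (N : M -> Prop) : Prop :=
  forall (A B : lmodType R) (g : {linear A -> B}),
    (forall b : B, exists a : A, g a = b) ->
    forall f : M -> B, linear_on N f ->
    exists h : M -> A, linear_on N h /\ forall x, N x -> g (h x) = f x.

Definition projective_module : Prop := projective_sub (fun _ => True).

Definition prime_sub (N P : M -> Prop) : Prop :=
  [/\ is_submodule P, psub P N,
      (* RN is not contained in P *)
      (exists (r : R) x, N x /\ ~ P (r *: x)) &
      forall (A : R -> Prop) (K : M -> Prop), is_ideal A -> is_submodule K -> psub K N ->
        (forall a k, A a -> K k -> P (a *: k)) ->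
        psub K P \/ (forall a x, A a -> N x -> P (a *: x))].

Definition completely_prime_sub (N P : M -> Prop) : Prop :=
  [/\ is_submodule P, psub P N,
      (exists (r : R) x, N x /\ ~ P (r *: x)) &
      forall (r : R) x, N x -> P (r *: x) -> P x \/ (forall y, N y -> P (r *: y))].

(* beta(N): intersection of all prime submodules of N (= N if there are none) *)
Definition beta (N : M -> Prop) : M -> Prop :=
  fun x => N x /\ forall P, prime_sub N P -> P x.

Definition beta_co (N : M -> Prop) : M -> Prop :=
  fun x => N x /\ forall P, completely_prime_sub N P -> P x.

Definition E0 (N : M -> Prop) : M -> Prop :=
  fun y => exists (r : R) x (k : nat), [/\ N x, r ^+ k *: x = 0 & y = r *: x].

End Defs.

Definition left_hereditary (R : pzRingType) : Prop :=
  forall (V : lmodType R), projective_module V ->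
    forall Q : V -> Prop, is_submodule Q -> projective_sub Q.

(* Main.v *)
Require Import Defs.
From mathcomp Require Import all_boot all_algebra.
From HB Require Import structures.
From mathcomp Require Import finmap.
From mathcomp.multinomials Require Import monalg.
From mathcomp Require classical_sets.
From Stdlib Require Import Classical ClassicalEpsilon.
Set Implicit Arguments. Unset Strict Implicit. Unset Printing Implicit Defensive.
Import GRing.Theory.
Local Open Scope ring_scope.
Section FM.
Context (K : choiceType) (R : pzRingType).
Definition FM := {malg R[K]}.
HB.instance Definition _ := GRing.Zmodule.on FM.
Definition fmscale (c : R) (g : FM) : FM := \sum_(k <- msupp g) << c * g@_k *g k >>.
Lemma fmscaleE c g k : (fmscale c g)@_k = c * g@_k.
Proof.
rewrite {2}[g]monalgE /fmscale !raddf_sum mulr_sumr.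
by apply/eq_bigr=> /= i _; rewrite !mcoeffU mulrnAr.
Qed.
Lemma fmscaleA c1 c2 g : fmscale c1 (fmscale c2 g) = fmscale (c1 * c2) g.
Proof. by apply/malgP=> x; rewrite !fmscaleE mulrA. Qed.
Lemma fmscale1r D: fmscale 1 D = D.
Proof. by apply/malgP=> k; rewrite !fmscaleE mul1r. Qed.
Lemma fmscaleDr c g1 g2 : fmscale c (g1 + g2) = fmscale c g1 + fmscale c g2.
Proof. by apply/malgP=> k; rewrite !(mcoeffD, fmscaleE) mulrDr. Qed.
Lemma fmscaleDl g c1 c2: fmscale (c1 + c2) g = fmscale c1 g + fmscale c2 g.
Proof. by apply/malgP=> x; rewrite !(mcoeffD, fmscaleE) mulrDl. Qed.
HB.instance Definition _ := GRing.Zmodule_isLmodule.Build R FM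
  fmscaleA fmscale1r fmscaleDr fmscaleDl.
Lemma fmZE c (g : FM) k : (c *: g)@_k = c * g@_k.
Proof. exact: fmscaleE. Qed.
End FM.

Section NT.
Context (R : pzRingType) (M : lmodType R) (N : M -> Prop) (HN : is_submodule N).
Definition Nb (_ : is_submodule N) : pred M := fun x => if excluded_middle_informative (N x) then true else false.
Lemma NbP x : reflect (N x) (Nb HN x).
Proof. rewrite /Nb; case: excluded_middle_informative => h; constructor => //. Qed.
Lemma Nb_closed : subsemimod_closed (Nb HN).
Proof.
case: HN => N0 ND NZ; split; first split.
- exact/NbP.
- by move=> x y /NbP hx /NbP hy; apply/NbP; apply: ND.
- by move=> r x /NbP hx; apply/NbP; apply: NZ.
Qed.
HB.instance Definition _ := GRing.isSubmodClosed.Build R M (Nb HN) Nb_closed.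
Definition NT := {x : M | Nb HN x}.
HB.instance Definition _ := [isSub of NT for @sval _ _].
HB.instance Definition _ := [Choice of NT by <:].
HB.instance Definition _ := [SubChoice_isSubLmodule of NT by <:].
End NT.
Local Open Scope fset_scope.
Section FMsum.
Context (K : choiceType) (R : pzRingType) (V : lmodType R) (v : K -> V).
Definition fmsum (a : FM K R) : V := \sum_(k <- msupp a) a@_k *: v k.
Lemma fmsum_incl (s : {fset K}) a : msupp a `<=` s ->
  fmsum a = \sum_(k <- s) a@_k *: v k.
Proof.
move=> sub; rewrite /fmsum; apply: big_fset_incl => // x _ xn.
by rewrite mcoeff_outdom // scale0r.
Qed.
Lemma fmsum_linear : linear fmsum.
Proof.
move=> c a b.
have sab : msupp (c *: a + b) `<=` msupp a `|` msupp b.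
  apply/fsubsetP => k; rewrite -mcoeff_neq0 mcoeffD fmZE in_fsetU -!mcoeff_neq0.
  case: (a@_k =P 0) => [->|//]; rewrite mulr0 add0r //.
rewrite (fmsum_incl sab) (fmsum_incl (a:=a) (fsubsetUl (msupp a) (msupp b))) (fmsum_incl (a:=b) (fsubsetUr (msupp a) (msupp b))).
rewrite scaler_sumr -big_split /=; apply: eq_bigr => k _.
by rewrite mcoeffD fmZE scalerDl scalerA.
Qed.
HB.instance Definition _ := GRing.isLinear.Build R (FM K R) V *:%R fmsum fmsum_linear.
Lemma fmsumU k : fmsum << 1 *g k >> = v k.
Proof.
by rewrite (fmsum_incl msuppU_le) big_seq_fset1 mcoeffUU scale1r.
Qed.
End FMsum.
Local Close Scope fset_scope.
Section RingZorn.
Context (R : pzRingType) (a : R) (nnil : forall n, a ^+ n != 0).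

Definition idl (X : R -> Prop) :=
  [/\ (forall x y, X x -> X y -> X (x + y)), (forall x, X x -> X (- x)),
      (forall r x, X x -> X (r * x)) & (forall r x, X x -> X (x * r))].

Definition Pz (X : R -> Prop) := idl X /\ forall n, ~ X (a ^+ n.+1).

Lemma gen_idl (A : R -> Prop) (x : R) :
  idl (fun u => forall J, idl J -> J 0 -> (forall q, A q -> J q) -> J x -> J u).
Proof.
split.
- by move=> u v hu hv J iJ J0 AJ Jx; case: (iJ) => D _ _ _; apply: D; [apply: hu|apply: hv].
- by move=> u hu J iJ J0 AJ Jx; case: (iJ) => _ Ng _ _; apply: Ng; apply: hu.
- by move=> r u hu J iJ J0 AJ Jx; case: (iJ) => _ _ L _; apply: L; apply: hu.
- by move=> r u hu J iJ J0 AJ Jx; case: (iJ) => _ _ _ Rr; apply: Rr; apply: hu.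
Qed.

Lemma prime_avoid : exists Q : R -> Prop,
  [/\ is_ideal Q, ~ Q 1, (forall x y, (forall r, Q (x * r * y)) -> Q x \/ Q y) & ~ Q a].
Proof.
have [A [PA Amax]] : exists A, Pz A /\ forall B, classical_sets.proper A B -> ~ Pz B.
  apply: classical_sets.Zorn_bigcup => F FP Ftot; split; last first.
    by move=> n [X /FP [_ hX] Xa]; exact: (hX n).
  split.
  - move=> x y [X FX Xx] [Y FY Yy].
    case: (Ftot X Y FX FY) => [XY|YX].
    + exists Y => //; case: (FP Y FY) => [[D _ _ _] _]; exact: D (XY _ Xx) Yy.
    + exists X => //; case: (FP X FX) => [[D _ _ _] _]; exact: D Xx (YX _ Yy).
  - by move=> x [X FX Xx]; exists X => //; case: (FP X FX) => [[_ Ng _ _] _]; exact: Ng.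
  - by move=> r x [X FX Xx]; exists X => //; case: (FP X FX) => [[_ _ L _] _]; exact: L.
  - by move=> r x [X FX Xx]; exists X => //; case: (FP X FX) => [[_ _ _ Rr] _]; exact: Rr.
have maxA : forall B, Pz B -> (forall u, A u -> B u) -> forall u, B u -> A u.
  move=> B PB AB; apply: NNPP => nBA; apply: (Amax B) => //; split => // BA; exact: nBA.
case: (PA) => [[AD AN AL AR] Adisj].
have A0 : A 0.
  apply: (maxA (fun u => A u \/ u = 0)); [|by move=> u; left|by right].
  split; last by move=> n [|h]; [exact: Adisj|move/eqP: (nnil n.+1); rewrite h].
  split.
  - by move=> x y [hx|->] [hy|->]; rewrite ?addr0 ?add0r; auto.
  - by move=> x [hx|->]; rewrite ?oppr0; auto.
  - by move=> r x [hx|->]; rewrite ?mulr0; auto.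
  - by move=> r x [hx|->]; rewrite ?mul0r; auto.
exists A; split => //.
- by move=> A1; apply: (Adisj 0); rewrite expr1 -[a]mulr1; apply: AL.
- move=> x y hxy; apply: NNPP => /not_or_and [nx ny].
  pose I1 := fun u => forall J, idl J -> J 0 -> (forall q, A q -> J q) -> J x -> J u.
  pose I2 := fun u => forall J, idl J -> J 0 -> (forall q, A q -> J q) -> J y -> J u.
  have iI1 : idl I1 by apply: gen_idl.
  have iI2 : idl I2 by apply: gen_idl.
  have [n In] : exists n, I1 (a ^+ n.+1).
    apply: NNPP => hn; apply: nx; apply: (maxA I1).
    - by split; [done|move=> k hI; apply: hn; exists k].
    - by move=> q Aq J _ _ AJ _; apply: AJ.
    - by move=> J _ _ _ Jx.
  have [m Im] : exists m, I2 (a ^+ m.+1).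
    apply: NNPP => hn; apply: ny; apply: (maxA I2).
    - by split; [done|move=> k hI; apply: hn; exists k].
    - by move=> q Aq J _ _ AJ _; apply: AJ.
    - by move=> J _ _ _ Jx.
  have I2T' : forall w, I2 w -> forall r, A (x * r * w).
    move=> w hw; apply: (hw (fun w => forall r, A (x * r * w))).
    - split.
      + by move=> u v hu hv r; rewrite mulrDr; apply: AD.
      + by move=> u hu r; rewrite mulrN; apply: AN.
      + by move=> s u hu r; rewrite mulrA -(mulrA x); apply: hu.
      + by move=> s u hu r; rewrite mulrA; apply: AR.
    - by move=> r; rewrite mulr0.
    - by move=> q Aq r; apply: AL.
    - exact: hxy.
  have I1T : forall u, I1 u -> forall w, I2 w -> A (u * w).
    move=> u hu; apply: (hu (fun u => forall w, I2 w -> A (u * w))).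
    - split.
      + by move=> u1 u2 h1 h2 w hw; rewrite mulrDl; apply: AD; [apply: h1|apply: h2].
      + by move=> u1 h1 w hw; rewrite mulNr; apply: AN; apply: h1.
      + by move=> r u1 h1 w hw; rewrite -mulrA; apply: AL; apply: h1.
      + move=> r u1 h1 w hw; rewrite -mulrA; apply: h1.
        by case: iI2 => _ _ L _; apply: L.
    - by move=> w _; rewrite mul0r.
    - by move=> q Aq w _; apply: AR.
    - by move=> w hw; rewrite -[x]mulr1; apply: I2T'.
  apply: (Adisj (n.+1 + m)); rewrite -addnS exprD; exact: I1T.
- by move=> Aa; apply: (Adisj 0); rewrite expr1.
Qed.
End RingZorn.
Lemma descent (R : pzRingType) (M : lmodType R) (N P : M -> Prop) :
  is_submodule N -> completely_prime_sub N P ->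
  forall r x, N x -> forall j, P (r ^+ j.+1 *: x) -> P (r *: x).
Proof.
move=> [N0 ND NZ] [_ _ _ cp] r x Nx; elim=> [|j IH]; first by rewrite expr1.
rewrite exprS -scalerA => h.
case: (cp r (r ^+ j.+1 *: x) (NZ _ _ Nx) h) => [|hy]; first exact: IH.
exact: hy.
Qed.
Unset Implicit Arguments.
Theorem lemma4p20 (R : pzRingType) (M : lmodType R) (N : M -> Prop) :
  left_hereditary R -> projective_module M -> is_submodule N ->
  psub (beta N) (gen_submodule (E0 N)) /\
  psub (gen_submodule (E0 N)) (beta_co N).
Proof.
move=> hered projM HN.
have HN' := HN; case: HN' => [N0 ND NZ].
split; last first.
  move=> x gx; split.
    apply: gx => //; move=> y [r [z [k [Nz _ ->]]]]; exact: NZ.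
  move=> P cP; apply: gx; first by case: cP.
  move=> y [r [z [k [Nz hk ->]]]].
  have [[P0 _ _] _ _ _] := cP.
  case: k hk => [|j] hk.
    by move: hk; rewrite expr0 scale1r => ->; rewrite scaler0.
  by apply: (descent HN cP Nz (j := j)); rewrite hk.
have projN := hered M projM N HN.
pose v := fun k : M => insubd (0 : NT HN) k.
pose f := fun y : M => insubd (0 : NT HN) y.
have fsurj : forall b : NT HN, exists a : FM M R, fmsum v a = b.
  move=> b; exists << 1 *g val b >>; by rewrite fmsumU /v valKd.
have flin : linear_on N f.
  move=> r y z Ny Nz; apply: val_inj; rewrite linearP /f /= !insubdK //; apply/NbP => //.
  by apply: ND => //; apply: NZ.
have [h [hlin hg]] := projN (FM M R) (NT HN) (fmsum v) fsurj f flin.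
have h0 : h 0 = 0.
  have := hlin 1 0 0 N0 N0; rewrite !scale1r addr0 => e.
  by apply: (@addrI _ (h 0)); rewrite addr0 -e.
have hadd : forall y z, N y -> N z -> h (y + z) = h y + h z.
  by move=> y z Ny Nz; rewrite -[y in LHS]scale1r hlin // scale1r.
have hscale : forall r y, N y -> h (r *: y) = r *: h y.
  by move=> r y Ny; rewrite -[r *: y]addr0 hlin // h0 addr0.
have repr : forall y, N y ->
    y = \sum_(k <- msupp (h y)) (h y)@_k *: val (v k).
  move=> y Ny; have e := congr1 val (hg y Ny).
  rewrite /f insubdK in e; last exact/NbP.
  rewrite -[y in LHS]e /fmsum raddf_sum; by apply: eq_bigr => k _.
have vN : forall k, N (val (v k)) by move=> k; apply/NbP; exact: valP.
move=> x [Nx bx].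
case: (classic (forall k, k \in msupp (h x) -> exists n, ((h x)@_k) ^+ n = 0)) => [nil|].
  move=> S hS hE; case: (hS) => S0 SD SZ.
  rewrite (repr x Nx) big_seq; apply: (big_ind S); [exact: S0 | exact: SD | move=> k kin].
  have [n hn] := nil k kin; apply: hE.
  by exists ((h x)@_k), (val (v k)), n; split => //; rewrite hn scale0r.
move=> nn0; have [k hk0] := not_all_ex_not _ _ nn0; have [_ hk] := imply_to_and _ _ hk0.
have nnil : forall n, ((h x)@_k) ^+ n != 0.
  by move=> n; apply/eqP => e; apply: hk; exists n.
have [Q [iQ nQ1 pQ nQc]] := prime_avoid nnil.
case: iQ => [Q0 QD QN QL QR].
pose PQ := fun y => N y /\ forall k, Q ((h y)@_k).
have sPQ : is_submodule PQ.
  split.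
  - by split => // k'; rewrite h0 mcoeff0.
  - move=> y z [Ny hy] [Nz hz]; split; first exact: ND.
    by move=> k'; rewrite hadd // mcoeffD; apply: QD.
  - move=> r y [Ny hy]; split; first exact: NZ.
    by move=> k'; rewrite hscale // fmZE; apply: QL.
have prPQ : prime_sub N PQ.
  split => //.
  - by move=> y [].
  - exists 1, x; split => //; rewrite scale1r => -[_ hx]; exact: nQc (hx k).
  move=> A K iA sK KN AK.
  case: (classic (psub K PQ)) => [|nKP]; first by left.
  right; have [k0 hk1] := not_all_ex_not _ _ nKP; have [Kk0 nP] := imply_to_and _ _ hk1.
  have Nk0 := KN _ Kk0.
  have [m nQb] : exists m, ~ Q ((h k0)@_m).
    by apply: NNPP => hn; apply: nP; split => // m; apply: NNPP => hm; apply: hn; exists m.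
  case: iA => [A0 AD AN AL AR].
  move=> a y Aa Ny.
  have Qa : Q a.
    case: (pQ a ((h k0)@_m)) => // r.
    have [_ hP] := AK (a * r) k0 (AR r a Aa) Kk0.
    by have := hP m; rewrite hscale // fmZE.
  split; first exact: NZ.
  by move=> k'; rewrite hscale // fmZE; apply: QR.
have [_ hx] := bx PQ prPQ.
by exfalso; exact: nQc (hx k).
Qed.
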